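(* Every passivization-covariant operation $\mathcal Q$ maps passive states to (nonnegative multiples of) passive states: for every $\tau\in\mathsf P(S)$, $\mathcal Q(\tau)=c\,\tau'$ for some $c\ge0$ and $\tau'\in\mathsf P(S)$. Moreover, every energy-preserving channel is passivization-covariant.
   Context: $S$ is a $d$-dimensional quantum system with non-degenerate Hamiltonian $H=\sum_i E_i|i\rangle\langle i|$, $E_1<\dots<E_d$. $\mathsf P(S)$ is the set of passive states, i.e. density matrices $\sum_ip_i|i\rangle\langle i|$ with $p_1\ge\dots\ge p_d$. Let $\tau_j=\frac1j\sum_{i=1}^j|i\rangle\langle i|$ and let the canonical passivization be the channel $\Pi(\rho)=\sum_{i=1}^d\langle i|\rho|i\rangle\,\tau_i$. A passivization-covariant operation is a completely positive trace-non-increasing map $\mathcal Q$ with $\mathcal Q\circ\Pi=\Pi\circ\mathcal Q$. An energy-preserving channel is a CPTP map $\mathcal E$ with $\langle i|\mathcal E(\rho)|i\rangle=\langle i|\rho|i\rangle$ for all $\rho$ and $i$. *)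

(* Defs.v *)
From HB Require Import structures.
From mathcomp Require Import all_boot all_order all_algebra.
Set Implicit Arguments. Unset Strict Implicit. Unset Printing Implicit Defensive.
Import Order.TTheory GRing.Theory Num.Theory.
Local Open Scope ring_scope.

Section Quantum.
Variable C : numClosedFieldType.

Definition psdf (T : finType) (A : T -> T -> C) : Prop :=
  forall v : T -> C, 0 <= \sum_(i : T) \sum_(j : T) (v i)^* * A i j * v j.

Definition psd (d : nat) (A : 'M[C]_d) : Prop := psdf (fun i j => A i j).

Definition density (d : nat) (rho : 'M[C]_d) : Prop := psd rho /\ \tr rho = 1.

(* Passive states (energy eigenbasis = standard basis |0>,...,|d-1>, ordered
   by increasing energy): diagonal density matrices with non-increasing
   populations. *)
Definition passive (d : nat) (rho : 'M[C]_d) : Prop :=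
  [/\ density rho,
      (forall i j : 'I_d, i != j -> rho i j = 0) &
      (forall i j : 'I_d, (i <= j)%N -> rho j j <= rho i i)].

(* tau_k = 1/(k+1) * sum_{i <= k} |i><i|  (0-based index k) *)
Definition tauk (d : nat) (k : 'I_d) : 'M[C]_d :=
  \matrix_(i, j) (if (i == j) && (i <= k)%N then (k.+1%:R)^-1 else 0).

Definition passivization (d : nat) (rho : 'M[C]_d) : 'M[C]_d :=
  \sum_(k < d) rho k k *: tauk k.

(* Complete positivity: for every n, id_n (x) Q maps positive semidefinite
   operators on C^n (x) C^d to positive semidefinite operators. The operator
   id_n (x) Q acts blockwise: block (a,b) of X is mapped by Q. *)
Definition completely_positive (d : nat) (Q : 'M[C]_d -> 'M[C]_d) : Prop :=
  forall (n : nat) (X : ('I_n * 'I_d)%type -> ('I_n * 'I_d)%type -> C),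
    psdf X ->
    psdf (fun p q : ('I_n * 'I_d)%type =>
            Q (\matrix_(i, j) X (p.1, i) (q.1, j)) p.2 q.2).

Definition trace_nonincreasing (d : nat) (Q : 'M[C]_d -> 'M[C]_d) : Prop :=
  forall rho : 'M[C]_d, psd rho -> \tr (Q rho) <= \tr rho.

Definition trace_preserving (d : nat) (Q : 'M[C]_d -> 'M[C]_d) : Prop :=
  forall rho : 'M[C]_d, \tr (Q rho) = \tr rho.

Definition passivization_covariant (d : nat) (Q : {linear 'M[C]_d -> 'M[C]_d}) : Prop :=
  [/\ completely_positive Q, trace_nonincreasing Q &
      forall rho, Q (passivization rho) = passivization (Q rho)].

Definition energy_preserving_channel (d : nat) (Q : {linear 'M[C]_d -> 'M[C]_d}) : Prop :=
  [/\ completely_positive Q, trace_preserving Q &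
      forall (rho : 'M[C]_d) (i : 'I_d), Q rho i i = rho i i].

End Quantum.

(* Main.v *)
Require Import Defs.
From HB Require Import structures.
From mathcomp Require Import all_boot all_order all_algebra.
From mathcomp Require Import ring.
Import Order.TTheory GRing.Theory Num.Theory.
Local Open Scope ring_scope.
Set Implicit Arguments. Unset Strict Implicit.

Section H.
Variable C : numClosedFieldType.

Lemma lin_zero (a s : C) : (forall t : C, t \is Num.real -> 0 <= a + t * s) -> s = 0.
Proof.
move=> H.
have ha : a \is Num.real by have := H 0 (rpred0 _); rewrite mul0r addr0; apply: ger0_real.
have hs : s \is Num.real.
  have := H 1 (rpred1 _); rewrite mul1r => /ger0_real h.
  have -> : s = (a + s) - a by rewrite addrC addKr.
  by apply: rpredB.
apply/eqP; apply/negP => nz.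
have := H (- (a + 1) / s).
rewrite divfK; last exact/negP.
have -> : a - (a + 1) = -1 by rewrite opprD addrA subrr add0r.
rewrite rpredM ?rpredN ?rpredV ?rpredD ?rpred1 // => /(_ isT).
by rewrite ler0N1.
Qed.

Definition v2 (T : finType) (i j : T) (x y : C) (k : T) : C :=
  if k == i then x else if k == j then y else 0.

Lemma sum2 (T : finType) (i j : T) (x y : C) (F : T -> C) (f : C -> C) :
  i != j -> f 0 = 0 ->
  \sum_l f (v2 i j x y l) * F l = f x * F i + f y * F j.
Proof.
move=> ij f0.
rewrite (bigD1 i) //= (bigD1 j) 1?eq_sym //= big1 ?addr0.
  by rewrite /v2 eqxx [j == i]eq_sym (negbTE ij) eqxx.
move=> k /andP [kj ki]; by rewrite /v2 (negbTE ki) (negbTE kj) f0 mul0r.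
Qed.

Lemma quad2 (T : finType) (X : T -> T -> C) i j x y : i != j ->
  \sum_k \sum_l (v2 i j x y k)^* * X k l * v2 i j x y l =
  x^* * (X i i * x + X i j * y) + y^* * (X j i * x + X j j * y).
Proof.
move=> ij.
under eq_bigr => k _ do under eq_bigr => l _ do rewrite -mulrA.
under eq_bigr => k _ do rewrite -mulr_sumr.
have E : forall k, \sum_l X k l * v2 i j x y l = X k i * x + X k j * y.
  move=> k. under eq_bigr => l _ do rewrite mulrC.
  by rewrite (@sum2 _ _ _ _ _ _ (fun z => z)) // mulrC [y * _]mulrC.
under eq_bigr => k _ do rewrite E.
by rewrite (@sum2 _ _ _ _ _ _ (fun z => z^*)) // conjC0.
Qed.

Lemma psd_ge0 (T : finType) (X : T -> T -> C) i : psdf X -> 0 <= X i i.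
Proof.
move=> H; have := H (fun k => if k == i then 1 else 0).
rewrite (bigD1 i) //=.
have -> : \sum_(i0 | i0 != i) \sum_j (if i0 == i then 1 else 0)^* * X i0 j * (if j == i then 1 else 0) = 0.
  apply: big1 => k /negbTE ->; rewrite conjC0; apply: big1 => l _; by rewrite !mul0r.
rewrite (bigD1 i) //=.
have -> : \sum_(i0 | i0 != i) (if i == i then 1 else 0)^* * X i i0 * (if i0 == i then 1 else 0) = 0.
  by apply: big1 => k /negbTE ->; rewrite mulr0.
by rewrite eqxx conjC1 mul1r mulr1 !addr0.
Qed.

Lemma psd_off (T : finType) (X : T -> T -> C) i j : psdf X -> i != j ->
  X i i = 0 -> X i j = 0 /\ X j i = 0.
Proof.
move=> H ij Xii.
have h1 : X i j + X j i = 0.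
  apply: (@lin_zero (X j j)) => t tr.
  have := H (v2 i j t 1); rewrite quad2 // conjC1 (conj_Creal tr) Xii.
  suff -> : X j j + t * (X i j + X j i) = t * (0 * t + X i j * 1) + 1 * (X j i * t + X j j * 1) by [].
  ring.
have h2 : 'i * (X j i - X i j) = 0.
  apply: (@lin_zero (X j j)) => t tr.
  have := H (v2 i j (t * 'i) 1); rewrite quad2 // conjC1 rmorphM /= (conj_Creal tr) conjCi Xii.
  suff -> : X j j + t * ('i * (X j i - X i j)) = t * - 'i * (0 * (t * 'i) + X i j * 1) + 1 * (X j i * (t * 'i) + X j j * 1) by [].
  ring.
move: h2 => /eqP; rewrite mulf_eq0 (negbTE (neq0Ci _)) /= subr_eq0 => /eqP h2.
rewrite h2 in h1 *.
have : X i j *+ 2 = 0 by rewrite mulr2n.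
by move/eqP; rewrite mulrn_eq0 /= => /eqP.
Qed.

Lemma sum_pair1 (d : nat) (F : ('I_1 * 'I_d)%type -> ('I_1 * 'I_d)%type -> C) :
  \sum_p \sum_q F p q = \sum_i \sum_j F (ord0, i) (ord0, j).
Proof.
rewrite (eq_bigr (fun p => \sum_q F (p.1, p.2) q)); last by move=> [a b].
rewrite -(pair_bigA _ (fun a b => \sum_q F (a, b) q)) big_ord1.
apply: eq_bigr => i _.
rewrite (eq_bigr (fun q => F (ord0, i) (q.1, q.2))); last by move=> [a b].
by rewrite -(pair_bigA _ (fun a b => F (ord0, i) (a, b))) big_ord1.
Qed.

Lemma cp_psd (d : nat) (Q : 'M[C]_d -> 'M[C]_d) (M : 'M[C]_d) :
  completely_positive Q -> psd M -> psd (Q M).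
Proof.
move=> cp pM.
have hX : psdf (fun p q : ('I_1 * 'I_d)%type => M p.2 q.2).
  by move=> w; rewrite sum_pair1; apply: pM.
move=> v.
have := cp 1%N _ hX (fun p => v p.2).
rewrite sum_pair1 /=.
have -> : (\matrix_(i, j) M i j) = M by apply/matrixP => i j; rewrite mxE.
by [].
Qed.

Definition isdiag (d : nat) (A : 'M[C]_d) := forall i j : 'I_d, i != j -> A i j = 0.

Lemma psd_diag (d : nat) (A : 'M[C]_d) : isdiag A -> (forall i, 0 <= A i i) -> psd A.
Proof.
move=> dA pA v.
apply: sumr_ge0 => i _.
rewrite (bigD1 i) //= big1 ?addr0.
  by rewrite mulrAC mulrC mulr_ge0 // mulrC mul_conjC_ge0.
by move=> j ji; rewrite dA 1?eq_sym // mulr0 mul0r.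
Qed.

Lemma diag_decomp (d : nat) (A : 'M[C]_d) : isdiag A ->
  A = \sum_m A m m *: delta_mx m m.
Proof.
move=> dA; apply/matrixP => i j; rewrite summxE.
rewrite (bigD1 i) //= big1 ?addr0.
  rewrite !mxE /= eqxx andTb; case: (eqVneq i j) => [->|ij]; first by rewrite mulr1.
  by rewrite dA // mulr0.
by move=> k ki; rewrite !mxE [i == k]eq_sym (negbTE ki) /= mulr0.
Qed.

Lemma pass_entry (d : nat) (X : 'M[C]_d) i j :
  passivization X i j = (i == j)%:R * \sum_(k < d | (i <= k)%N) X k k * (k.+1%:R)^-1.
Proof.
rewrite /passivization summxE.
under eq_bigr => k _ do rewrite !mxE.
case: (eqVneq i j) => [->|ij] /=.
  rewrite mul1r [in RHS]big_mkcond /=; apply: eq_bigr => k _.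
  by case: ifP; rewrite ?mulr0.
by rewrite mul0r; apply: big1 => k _; rewrite mulr0.
Qed.

Lemma pass_diag (d : nat) (X : 'M[C]_d) : isdiag (passivization X).
Proof. by move=> i j ij; rewrite pass_entry (negbTE ij) mul0r. Qed.

Lemma delta_off (d : nat) (m i j : 'I_d) : i != j -> (delta_mx m m : 'M[C]_d) i j = 0.
Proof.
move=> ij; rewrite mxE; case: (eqVneq i m) => [eim|] //=.
case: (eqVneq j m) => [ejm|] //.
by move: ij; rewrite eim ejm eqxx.
Qed.

Lemma ep_delta (d : nat) (E : {linear 'M[C]_d -> 'M[C]_d}) m :
  energy_preserving_channel E -> E (delta_mx m m) = delta_mx m m.
Proof.
case=> cp _ diagE.
have pD : psd (delta_mx m m : 'M[C]_d).
  apply: psd_diag => [i j ij|i]; first exact: delta_off.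
  by rewrite mxE; case: (_ && _).
have pY := cp_psd cp pD.
apply/matrixP => i j.
case: (eqVneq i j) => [->|ij]; first by rewrite diagE.
rewrite delta_off //.
case: (eqVneq i m) => [eim|nim].
  have jm : j != m by rewrite -eim eq_sym.
  have Yjj : E (delta_mx m m) j j = 0 by rewrite diagE mxE (negbTE jm).
  have ji : j != i by rewrite eq_sym.
  by case: (psd_off pY ji Yjj) => _ ->.
have Yii : E (delta_mx m m) i i = 0 by rewrite diagE mxE (negbTE nim).
by case: (psd_off pY ij Yii).
Qed.

Lemma ep_fix (d : nat) (E : {linear 'M[C]_d -> 'M[C]_d}) (A : 'M[C]_d) :
  energy_preserving_channel E -> isdiag A -> E A = A.
Proof.
move=> hE dA.
rewrite [in LHS](diag_decomp dA) linear_sum [in RHS](diag_decomp dA).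
by apply: eq_bigr => m _; rewrite linearZ /= ep_delta.
Qed.

Lemma part2 (d : nat) (E : {linear 'M[C]_d -> 'M[C]_d}) :
  energy_preserving_channel E -> passivization_covariant E.
Proof.
move=> hE; have [cp tp diagE] := hE.
split => //; first by move=> rho _; rewrite tp.
move=> rho; rewrite ep_fix //; last exact: pass_diag.
by rewrite /passivization; apply: eq_bigr => k _; rewrite diagE.
Qed.

Lemma tr_pass (d : nat) (X : 'M[C]_d) : \tr (passivization X) = \sum_k X k k.
Proof.
rewrite /mxtrace.
under eq_bigr => i _ do rewrite pass_entry eqxx mul1r.
rewrite (exchange_big_dep (fun _ => true)) //=.
apply: eq_bigr => k _.
have -> : \sum_(i < d | (i <= k)%N) X k k / k.+1%:R = (X k k / k.+1%:R) *+ k.+1.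
  rewrite -(big_mkord (fun i => (i <= k)%N) (fun _ => X k k / k.+1%:R)).
  have kd : (k.+1 <= d)%N by [].
  rewrite -(big_nat_widen _ _ _ (fun _ => true) _ kd) /=.
  by rewrite sumr_const_nat subn0.
by rewrite -mulr_natr divfK // pnatr_eq0.
Qed.

Lemma sum_mono (d : nat) (F : 'I_d -> C) (i j : nat) : (i <= j)%N ->
  (forall k, 0 <= F k) ->
  \sum_(k < d | (j <= k)%N) F k <= \sum_(k < d | (i <= k)%N) F k.
Proof.
move=> ij F0.
rewrite [X in _ <= X](bigID (fun k : 'I_d => (j <= k)%N)) /=.
have -> : \sum_(k < d | (i <= k)%N && (j <= k)%N) F k = \sum_(k < d | (j <= k)%N) F k.
  apply: eq_bigl => k; apply/andP/idP => [[]//|jk]; split => //.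
  exact: leq_trans ij jk.
by rewrite lerDl sumr_ge0.
Qed.

Lemma pass_passive (d : nat) (X : 'M[C]_d) : psd X -> \sum_k X k k != 0 ->
  passive ((\sum_k X k k)^-1 *: passivization X).
Proof.
move=> pX nz.
set c := \sum_k X k k.
have c0 : 0 <= c by apply: sumr_ge0 => k _; apply: psd_ge0.
have ci0 : 0 <= c^-1 by rewrite invr_ge0.
have ent : forall i, ((c^-1 *: passivization X) i i) =
   c^-1 * \sum_(k < d | (i <= k)%N) X k k * (k.+1%:R)^-1.
  by move=> i; rewrite mxE pass_entry eqxx mul1r.
have tge0 : forall k : 'I_d, 0 <= X k k * (k.+1%:R)^-1.
  by move=> k; rewrite mulr_ge0 ?invr_ge0 ?ler0n ?psd_ge0.
split.
- split.
    apply: psd_diag => [i j ij|i]; first by rewrite mxE pass_diag // mulr0.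
    by rewrite ent mulr_ge0 // sumr_ge0.
  by rewrite mxtraceZ tr_pass -/c mulVf.
- by move=> i j ij; rewrite mxE pass_diag // mulr0.
- move=> i j ij; rewrite !ent; apply: ler_wpM2l => //.
  exact: sum_mono.
Qed.

Lemma passive_pre (d : nat) (tau : 'M[C]_d) : passive tau ->
  exists D : 'M[C]_d, psd D /\ passivization D = tau.
Proof.
case: d tau => [|d] tau [[ptau tr1] offd mono].
  by move: tr1; rewrite /mxtrace big_ord0 => /eqP; rewrite eq_sym oner_eq0.
pose p (n : nat) : C := if (n < d.+1)%N then tau (inord n) (inord n) else 0.
have pval : forall i : 'I_d.+1, p i = tau i i.
  by move=> i; rewrite /p ltn_ord inord_val.
have pmono : forall n : nat, (n < d.+1)%N -> p n.+1 <= p n.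
  move=> n nd; rewrite /p nd; case: ifP => h.
    apply: mono; rewrite inordK // inordK //; exact: leq_trans (leqnSn n) h.
  exact: psd_ge0.
pose D : 'M[C]_d.+1 := \matrix_(i, j) if i == j then i.+1%:R * (p i - p i.+1) else 0.
exists D; split.
  apply: psd_diag => [i j ij|i]; rewrite mxE ?(negbTE ij) // eqxx.
  by rewrite mulr_ge0 ?ler0n // subr_ge0 pmono.
apply/matrixP => i j; rewrite pass_entry.
under eq_bigr => k _ do rewrite mxE eqxx mulrC mulKf ?pnatr_eq0 //.
have -> : \sum_(k < d.+1 | (i <= k)%N) (p k - p k.+1) = p i.
  rewrite (eq_bigl (fun k : 'I_d.+1 => true && (i <= k)%N)) //.
  rewrite -(@big_geq_mkord _ _ _ i d.+1 xpredT (fun k => p k - p k.+1)).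
  rewrite (telescope_sumr_eq (fun k => - p k)); last first.
    by move=> k _; rewrite opprK addrC.
    exact: ltnW (ltn_ord i).
  by rewrite /p ltnn oppr0 add0r opprK.
case: (eqVneq i j) => [<-|ij]; first by rewrite mul1r pval.
by rewrite mul0r offd.
Qed.
End H.

Theorem mainTheorem19 (C : numClosedFieldType) (d : nat) :
  (forall Q : {linear 'M[C]_d -> 'M[C]_d},
     passivization_covariant Q ->
     forall tau : 'M[C]_d, passive tau ->
       exists c : C, 0 <= c /\ exists tau' : 'M[C]_d, passive tau' /\ Q tau = c *: tau')
  /\
  (forall E : {linear 'M[C]_d -> 'M[C]_d},
     energy_preserving_channel E -> passivization_covariant E).
Proof.
split; last by move=> E; apply: part2.
move=> Q [cp _ cov] tau ptau.
have [D [pD eD]] := passive_pre ptau.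
rewrite -eD cov; rewrite -eD in ptau.
have pX := cp_psd cp pD.
case: (eqVneq (\sum_k Q D k k) 0) => [c0|nz].
  exists 0; split; first exact: lexx.
  exists (passivization D); split; first exact: ptau.
  rewrite scale0r /passivization; apply: big1 => k _.
  have h0 : forall i : 'I_d, true -> 0 <= Q D i i.
    by move=> i _; exact: (psd_ge0 (X := fun a b => Q D a b) i pX).
  by rewrite (psumr_eq0P h0 c0) // scale0r.
have hge : forall i : 'I_d, 0 <= Q D i i.
  by move=> i; exact: (psd_ge0 (X := fun a b => Q D a b) i pX).
exists (\sum_k Q D k k); split; first by apply: sumr_ge0 => k _; apply: hge.
exists ((\sum_k Q D k k)^-1 *: passivization (Q D)); split.
  exact: (pass_passive pX nz).
by rewrite scalerA (divff nz) scale1r.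
Qed.
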